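(* Let $g$ be a Morse isometry of a proper geodesic space $X$ with poles $g^+,g^-$. Then for every point $x\in X$, $g^n(x)\to g^+$ and $g^{-n}(x)\to g^-$ as $n\to+\infty$.
   Context: A Morse gauge is a function $N:[1,\infty)\times[0,\infty)\to[0,\infty)$; a (quasi-)geodesic $\gamma$ is $N$-Morse if every $(\lambda,\epsilon)$-quasi-geodesic with endpoints on $\gamma$ lies in the $N(\lambda,\epsilon)$-neighborhood of $\gamma$. $\partial_M X$ is the set of Morse geodesic rays modulo finite Hausdorff distance; isometries act by $[\alpha]\mapsto[g\circ\alpha]$. With $x_0\in X$ and $x_n=g^n(x_0)$, an isometry $g$ is Morse if there are a Morse gauge $N$ and geodesics $[x_i,x_{i+1}]$ whose bi-infinite concatenation is an $N$-Morse quasi-geodesic. A Morse isometry has exactly two fixed points in $\partial_M X$, its poles $g^+$ and $g^-$ (the endpoints of a Morse bi-infinite geodesic at finite Hausdorff distance from this concatenation, $g^+$ corresponding to the direction $n\to+\infty$ and $g^-$ to $n\to-\infty$). For $y_n\in X$ and $p\in\partial_M X$, $y_n\to p$ means: for a (equivalently any) basepoint $x$, there exist a Morse gauge $N$ and $N$-Morse geodesics $[x,y_n]$ such that every subsequence of $([x,y_n])$ has a further subsequence converging uniformly on compact sets to a geodesic ray $\gamma$ with $\gamma(0)=x$ and $[\gamma]=p$. *)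

(* Defs.v *)
From Stdlib Require Import Reals ZArith.
Open Scope R_scope.

Record MetricSpace := {
  pt :> Type;
  dist : pt -> pt -> R;
  dist_nonneg : forall x y, 0 <= dist x y;
  dist_eq0 : forall x y, dist x y = 0 <-> x = y;
  dist_sym : forall x y, dist x y = dist y x;
  dist_tri : forall x y z, dist x z <= dist x y + dist y z
}.

Arguments dist {m} _ _.

Section Morse.
Variable X : MetricSpace.

Definition strict_incr (phi : nat -> nat) : Prop :=
  forall m n, (m < n)%nat -> (phi m < phi n)%nat.

Definition seq_converges (u : nat -> X) (l : X) : Prop :=
  forall eps, 0 < eps -> exists K, forall k, (K <= k)%nat -> dist (u k) l <= eps.

Definition proper_space : Prop :=
  forall (x : X) (r : R) (u : nat -> X), (forall n, dist x (u n) <= r) ->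
    exists phi l, strict_incr phi /\ dist x l <= r /\ seq_converges (fun k => u (phi k)) l.

Definition geodesic_on (I : R -> Prop) (c : R -> X) : Prop :=
  forall s t, I s -> I t -> dist (c s) (c t) = Rabs (s - t).

Definition geodesic_space : Prop :=
  forall x y : X, exists c : R -> X,
    geodesic_on (fun t => 0 <= t <= dist x y) c /\ c 0 = x /\ c (dist x y) = y.

Definition quasi_geodesic_on (lam eps : R) (I : R -> Prop) (q : R -> X) : Prop :=
  forall s t, I s -> I t ->
    / lam * Rabs (s - t) - eps <= dist (q s) (q t) <= lam * Rabs (s - t) + eps.

Definition gauge := R -> R -> R.

Definition is_N_Morse (N : gauge) (I : R -> Prop) (c : R -> X) : Prop :=
  forall (lam eps a b : R) (q : R -> X),
    1 <= lam -> 0 <= eps -> a <= b ->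
    quasi_geodesic_on lam eps (fun t => a <= t <= b) q ->
    (exists s, I s /\ q a = c s) ->
    (exists s, I s /\ q b = c s) ->
    forall t, a <= t <= b -> exists s, I s /\ dist (q t) (c s) <= N lam eps.

Definition nonneg_half (t : R) : Prop := 0 <= t.
Definition whole_line (t : R) : Prop := True.

Definition geodesic_ray (c : R -> X) : Prop := geodesic_on nonneg_half c.

(** Morse geodesic rays: representatives of points of the Morse boundary. *)
Definition Morse_ray (c : R -> X) : Prop :=
  geodesic_ray c /\ exists N, is_N_Morse N nonneg_half c.

Definition finite_hausdorff (I1 : R -> Prop) (c1 : R -> X)
    (I2 : R -> Prop) (c2 : R -> X) : Prop :=
  exists C, (forall s, I1 s -> exists t, I2 t /\ dist (c1 s) (c2 t) <= C) /\
            (forall t, I2 t -> exists s, I1 s /\ dist (c1 s) (c2 t) <= C).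

Definition same_boundary_point (c1 c2 : R -> X) : Prop :=
  finite_hausdorff nonneg_half c1 nonneg_half c2.

Definition unif_cvg_compacts (beta : nat -> R -> X) (len : nat -> R)
    (gam : R -> X) : Prop :=
  forall T eps, 0 < eps -> exists K, forall k, (K <= k)%nat ->
    T <= len k /\ forall t, 0 <= t <= T -> dist (beta k t) (gam t) <= eps.

Definition converges_to_boundary (y : nat -> X) (p : R -> X) : Prop :=
  exists (x : X) (N : gauge) (beta : nat -> R -> X),
    (forall n, geodesic_on (fun t => 0 <= t <= dist x (y n)) (beta n) /\
               beta n 0 = x /\ beta n (dist x (y n)) = y n /\
               is_N_Morse N (fun t => 0 <= t <= dist x (y n)) (beta n)) /\
    forall phi, strict_incr phi ->
      exists psi gam, strict_incr psi /\ geodesic_ray gam /\ gam 0 = x /\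
        same_boundary_point gam p /\
        unif_cvg_compacts (fun k => beta (phi (psi k)))
                          (fun k => dist x (y (phi (psi k)))) gam.

Definition isometry (g : X -> X) : Prop := forall x y, dist (g x) (g y) = dist x y.

Definition zpow (g ginv : X -> X) (n : Z) (x : X) : X :=
  match n with
  | Z0 => x
  | Zpos p => Nat.iter (Pos.to_nat p) g x
  | Zneg p => Nat.iter (Pos.to_nat p) ginv x
  end.

Definition Morse_concatenation (g ginv : X -> X) (x0 : X) (N : gauge)
    (c : Z -> R -> X) (Gam : R -> X) : Prop :=
  let L := dist x0 (g x0) in
  0 < L /\
  (forall i : Z, geodesic_on (fun t => 0 <= t <= L) (c i) /\
                 c i 0 = zpow g ginv i x0 /\ c i L = zpow g ginv (i + 1) x0) /\
  (forall (i : Z) t, 0 <= t <= L -> Gam (IZR i * L + t) = c i t) /\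
  (exists lam eps, 1 <= lam /\ 0 <= eps /\ quasi_geodesic_on lam eps whole_line Gam) /\
  is_N_Morse N whole_line Gam.

Definition Morse_isometry (g ginv : X -> X) : Prop :=
  exists x0 N c Gam, Morse_concatenation g ginv x0 N c Gam.

(** [gp] and [gm] represent the poles g^+ and g^-: they are the two ends of a
    Morse bi-infinite geodesic [gam] at finite Hausdorff distance from the
    concatenation, with gam(t), t -> +oo, corresponding to n -> +oo. *)
Definition poles (g ginv : X -> X) (gp gm : R -> X) : Prop :=
  exists x0 N c Gam (gam : R -> X),
    Morse_concatenation g ginv x0 N c Gam /\
    geodesic_on whole_line gam /\ (exists N', is_N_Morse N' whole_line gam) /\
    finite_hausdorff whole_line gam whole_line Gam /\
    finite_hausdorff nonneg_half gam nonneg_half Gam /\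
    Morse_ray gp /\ same_boundary_point gp gam /\
    Morse_ray gm /\ same_boundary_point gm (fun t => gam (- t)).

End Morse.

(* Main.v *)
Require Import Defs.
From Stdlib Require Import Reals ZArith.
From Stdlib Require Import Lra Lia Classical ClassicalEpsilon Cantor.
Open Scope R_scope.
Local Notation dist := Defs.dist.

Lemma Rabs_le_between (a b : R) : Rabs a <= b -> - b <= a <= b.
Proof. unfold Rabs; destruct Rcase_abs; lra. Qed.

Lemma civt_aux (sg : R -> R) (b J : R) :
  forall n : nat, forall a, a <= b -> b - a <= INR n ->
  (forall t t', a <= t <= b -> a <= t' <= b -> Rabs (t - t') <= 1 -> Rabs (sg t - sg t') <= J) ->
  forall w, (sg a <= w <= sg b \/ sg b <= w <= sg a) ->
  exists t, a <= t <= b /\ Rabs (sg t - w) <= J.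
Proof.
  induction n as [|n IH]; intros a Hab Hn Hc w Hw.
  - simpl in Hn. assert (a = b) by lra. subst. exists b. split. lra.
    replace w with (sg b) by lra. rewrite Rminus_diag, Rabs_R0.
    specialize (Hc b b). rewrite !Rminus_diag, !Rabs_R0 in Hc. apply Hc; lra.
  - destruct (Rle_dec (b - a) 1) as [H1|H1].
    + exists a. split. lra. assert (HJ := Hc a b ltac:(lra) ltac:(lra) ltac:(rewrite Rabs_left1; lra)).
      apply Rabs_le_between in HJ. apply Rabs_le. lra.
    + assert (HJ := Hc a (a+1) ltac:(lra) ltac:(lra) ltac:(rewrite Rabs_left1; lra)).
      apply Rabs_le_between in HJ.
      destruct (classic (sg a <= w <= sg (a+1) \/ sg (a+1) <= w <= sg a)) as [Hb|Hb].
      * exists a. split. lra. apply Rabs_le. lra.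
      * destruct (IH (a+1)) with (w := w) as [t [Ht1 Ht2]].
        -- lra.
        -- rewrite S_INR in Hn. lra.
        -- intros t t' H3 H4 H5. apply Hc; lra.
        -- apply not_or_and in Hb. destruct Hb as [Hb1 Hb2].
           apply not_and_or in Hb1. apply not_and_or in Hb2.
           destruct Hb1; destruct Hb2; lra.
        -- exists t. split. lra. exact Ht2.
Qed.

Lemma civt (sg : R -> R) (a b J : R) : a <= b ->
  (forall t t', a <= t <= b -> a <= t' <= b -> Rabs (t - t') <= 1 -> Rabs (sg t - sg t') <= J) ->
  forall w, (sg a <= w <= sg b \/ sg b <= w <= sg a) ->
  exists t, a <= t <= b /\ Rabs (sg t - w) <= J.
Proof.
  intros Hab Hc w Hw.
  destruct (INR_unbounded (b - a)) as [n Hn].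
  eapply civt_aux with (n := n); eauto. lra.
Qed.


Section Gen.
Variable X : MetricSpace.

Lemma d_refl (x : X) : dist x x = 0.
Proof. apply (proj2 (Defs.dist_eq0 X x x)); reflexivity. Qed.

Lemma d_tri (x y z : X) : dist x z <= dist x y + dist y z.
Proof. apply Defs.dist_tri. Qed.

Lemma d_sym (x y : X) : dist x y = dist y x.
Proof. apply Defs.dist_sym. Qed.

Lemma d_nn (x y : X) : 0 <= dist x y.
Proof. apply Defs.dist_nonneg. Qed.

Lemma d_eq (x y : X) : dist x y = 0 -> x = y.
Proof. apply Defs.dist_eq0. Qed.

Lemma small_le (a b : R) : (forall e, 0 < e -> a <= b + e) -> a <= b.
Proof.
  intros H. destruct (Rle_dec a b) as [h|h]; auto.
  specialize (H ((a - b)/2) ltac:(lra)). lra.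
Qed.

Lemma qg_lo lam eps (I : R -> Prop) (q : R -> X) s t :
  quasi_geodesic_on X lam eps I q -> 1 <= lam -> I s -> I t ->
  Rabs (s - t) <= lam * (dist (q s) (q t) + eps).
Proof.
  intros Hq Hl Hs Ht. destruct (Hq s t Hs Ht) as [H1 _].
  assert (H2 : / lam * Rabs (s - t) <= dist (q s) (q t) + eps) by lra.
  apply Rmult_le_compat_l with (r := lam) in H2; [|lra].
  rewrite <- Rmult_assoc, Rinv_r in H2; lra.
Qed.

Lemma qg_up lam eps (I : R -> Prop) (q : R -> X) s t :
  quasi_geodesic_on X lam eps I q -> I s -> I t ->
  dist (q s) (q t) <= lam * Rabs (s - t) + eps.
Proof. intros Hq Hs Ht. apply (Hq s t Hs Ht). Qed.

Lemma qg_of lam eps (I : R -> Prop) (q : R -> X) : 1 <= lam ->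
  (forall s t, I s -> I t -> Rabs (s - t) <= lam * (dist (q s) (q t) + eps) /\
      dist (q s) (q t) <= lam * Rabs (s - t) + eps) ->
  quasi_geodesic_on X lam eps I q.
Proof.
  intros Hl H s t Hs Ht. destruct (H s t Hs Ht) as [H1 H2]. split; auto.
  assert (/ lam * Rabs (s - t) <= / lam * (lam * (dist (q s) (q t) + eps))).
  { apply Rmult_le_compat_l; auto. left. apply Rinv_0_lt_compat. lra. }
  rewrite <- Rmult_assoc, Rinv_l in H0; lra.
Qed.

Lemma geo_qg (I : R -> Prop) (c : R -> X) : geodesic_on X I c -> quasi_geodesic_on X 1 0 I c.
Proof.
  intros Hc. apply qg_of. lra. intros s t Hs Ht. rewrite (Hc s t Hs Ht). lra.
Qed.

Lemma qg_perturb lam eps (I : R -> Prop) (q q' : R -> X) R0 :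
  1 <= lam -> quasi_geodesic_on X lam eps I q -> (forall u, I u -> dist (q' u) (q u) <= R0) ->
  quasi_geodesic_on X lam (eps + 2 * R0) I q'.
Proof.
  intros Hl Hq Hd. apply qg_of; auto. intros s t Hs Ht.
  pose proof (qg_lo _ _ _ _ _ _ Hq Hl Hs Ht). pose proof (qg_up _ _ _ _ _ _ Hq Hs Ht).
  pose proof (Hd s Hs). pose proof (Hd t Ht).
  pose proof (d_tri (q s) (q' s) (q t)). pose proof (d_tri (q' s) (q' t) (q t)).
  pose proof (d_tri (q' s) (q s) (q' t)). pose proof (d_tri (q s) (q t) (q' t)).
  rewrite (d_sym (q s) (q' s)) in *. rewrite (d_sym (q t) (q' t)) in *.
  split; [|lra].
  apply Rle_trans with (1 := H). apply Rmult_le_compat_l; lra.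
Qed.

Lemma morse_perturb N (I : R -> Prop) (c : R -> X) lam eps a b (q : R -> X) R0 s1 s2 :
  is_N_Morse X N I c -> 1 <= lam -> 0 <= eps -> 0 <= R0 -> a <= b ->
  quasi_geodesic_on X lam eps (fun t => a <= t <= b) q -> I s1 -> I s2 ->
  dist (q a) (c s1) <= R0 -> dist (q b) (c s2) <= R0 ->
  forall t, a <= t <= b -> exists s, I s /\ dist (q t) (c s) <= Rmax 0 (N lam (eps + 2 * R0)) + R0.
Proof.
  intros HN Hl He HR Hab Hq Hs1 Hs2 Ha Hb t Ht.
  pose proof (Rmax_l 0 (N lam (eps + 2 * R0))).
  pose proof (Rmax_r 0 (N lam (eps + 2 * R0))).
  destruct (Req_dec a b) as [Heq|Hne].
  - subst b. assert (t = a) by lra. subst t. exists s1. split; auto. lra.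
  - set (q' := fun u => if Req_EM_T u a then c s1 else if Req_EM_T u b then c s2 else q u).
    assert (Hq' : quasi_geodesic_on X lam (eps + 2 * R0) (fun t => a <= t <= b) q').
    { apply qg_perturb with (q := q); auto. intros u Hu. unfold q'.
      destruct (Req_EM_T u a). subst; rewrite d_sym; auto.
      destruct (Req_EM_T u b). subst; rewrite d_sym; auto. rewrite d_refl; lra. }
    assert (Ha' : q' a = c s1). { unfold q'. destruct (Req_EM_T a a); congruence. }
    assert (Hb' : q' b = c s2). { unfold q'. destruct (Req_EM_T b a). lra. destruct (Req_EM_T b b); congruence. }
    destruct (HN lam (eps + 2 * R0) a b q' Hl ltac:(lra) Hab Hq' (ex_intro _ s1 (conj Hs1 Ha'))
                (ex_intro _ s2 (conj Hs2 Hb')) t Ht) as [s [Hs Hd]].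
    exists s. split; auto.
    assert (dist (q t) (q' t) <= R0).
    { unfold q'. destruct (Req_EM_T t a). subst; auto.
      destruct (Req_EM_T t b). subst; auto. rewrite d_refl; lra. }
    pose proof (d_tri (q t) (q' t) (c s)). lra.
Qed.

Lemma qg_neg lam eps (G : R -> X) : quasi_geodesic_on X lam eps (whole_line) G ->
  quasi_geodesic_on X lam eps (whole_line) (fun t => G (- t)).
Proof.
  intros H s t _ _. replace (Rabs (s - t)) with (Rabs (- s - - t)).
  apply H; exact I. rewrite <- Rabs_Ropp. f_equal. ring.
Qed.

Lemma morse_neg N (G : R -> X) : is_N_Morse X N whole_line G ->
  is_N_Morse X N whole_line (fun t => G (- t)).
Proof.
  intros H lam eps a b q Hl He Hab Hq [s1 [_ H1]] [s2 [_ H2]] t Ht.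
  destruct (H lam eps a b q Hl He Hab Hq (ex_intro _ (- s1) (conj I H1)) (ex_intro _ (- s2) (conj I H2)) t Ht)
    as [s [_ Hs]].
  exists (- s). split. exact I. rewrite Ropp_involutive. exact Hs.
Qed.

Lemma fh_sym I1 (c1 : R -> X) I2 c2 : finite_hausdorff X I1 c1 I2 c2 -> finite_hausdorff X I2 c2 I1 c1.
Proof.
  intros [C [H1 H2]]. exists C. split.
  - intros s Hs. destruct (H2 s Hs) as [t [Ht Hd]]. exists t. rewrite d_sym. auto.
  - intros t Ht. destruct (H1 t Ht) as [s [Hs Hd]]. exists s. rewrite d_sym. auto.
Qed.

Lemma fh_trans I1 (c1 : R -> X) I2 c2 I3 c3 : finite_hausdorff X I1 c1 I2 c2 ->
  finite_hausdorff X I2 c2 I3 c3 -> finite_hausdorff X I1 c1 I3 c3.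
Proof.
  intros [C [H1 H2]] [C' [H1' H2']]. exists (C + C'). split.
  - intros s Hs. destruct (H1 s Hs) as [t [Ht Hd]]. destruct (H1' t Ht) as [u [Hu Hd']].
    exists u. split; auto. pose proof (d_tri (c1 s) (c2 t) (c3 u)). lra.
  - intros u Hu. destruct (H2' u Hu) as [t [Ht Hd]]. destruct (H2 t Ht) as [s [Hs Hd']].
    exists s. split; auto. pose proof (d_tri (c1 s) (c2 t) (c3 u)). lra.
Qed.

End Gen.


Section Loc.
Variable X : MetricSpace.

Lemma loc_upper (Lm E lam eps R0 : R) : 1 <= Lm -> 0 <= E -> 1 <= lam -> 0 <= eps -> 0 <= R0 ->
  exists C, 0 <= C /\ forall (G : R -> X) q a b (sg : R -> R) u1 u2,
    quasi_geodesic_on X Lm E whole_line G ->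
    quasi_geodesic_on X lam eps (fun t => a <= t <= b) q -> a <= b ->
    (forall t, a <= t <= b -> dist (q t) (G (sg t)) <= R0) ->
    dist (q a) (G u1) <= R0 -> dist (q b) (G u2) <= R0 ->
    forall t, a <= t <= b -> sg t <= Rmax u1 u2 + C.
Proof.
  intros HL HE Hl He HR.
  set (J := Lm * (2 * R0 + lam + eps + E)).
  set (c1 := Lm * (2 * R0 + E)).
  set (T0 := lam * (2 * R0 + 2 * Lm * J + E + eps)).
  set (W := Lm * (2 * R0 + lam * T0 + eps + E)).
  assert (HJ : 0 <= J) by (unfold J; apply Rmult_le_pos; lra).
  assert (Hc1 : 0 <= c1) by (unfold c1; apply Rmult_le_pos; lra).
  assert (HT0 : 0 <= T0) by (unfold T0; apply Rmult_le_pos; [lra|]; 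
     assert (0 <= Lm * J) by (apply Rmult_le_pos; lra); lra).
  assert (HW : 0 <= W) by (unfold W; apply Rmult_le_pos; [lra|];
     assert (0 <= lam * T0) by (apply Rmult_le_pos; lra); lra).
  exists (c1 + J + W). split. lra.
  intros G q a b sg u1 u2 HG Hq Hab Hp Ha Hb t Ht.
  assert (GI : forall s, whole_line s) by (intros; exact I).
  assert (Hcc : forall t t', a <= t <= b -> a <= t' <= b -> Rabs (t - t') <= 1 -> Rabs (sg t - sg t') <= J).
  { intros s s' Hs Hs' Hss.
    pose proof (qg_lo X _ _ _ _ _ _ HG HL (GI (sg s)) (GI (sg s'))).
    pose proof (qg_up X _ _ _ _ _ _ Hq Hs Hs').
    pose proof (Hp s Hs). pose proof (Hp s' Hs').
    pose proof (d_tri X (G (sg s)) (q s) (G (sg s'))). pose proof (d_tri X (q s) (q s') (G (sg s'))).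
    rewrite (d_sym X (G (sg s)) (q s)) in *.
    apply Rle_trans with (1 := H). unfold J. apply Rmult_le_compat_l. lra.
    assert (lam * Rabs (s - s') <= lam * 1) by (apply Rmult_le_compat_l; lra). lra. }
  assert (Hend : forall u s, a <= s <= b -> dist (q s) (G u) <= R0 -> Rabs (sg s - u) <= c1).
  { intros u s Hs Hu. pose proof (qg_lo X _ _ _ _ _ _ HG HL (GI (sg s)) (GI u)).
    pose proof (Hp s Hs). pose proof (d_tri X (G (sg s)) (q s) (G u)).
    rewrite (d_sym X (G (sg s)) (q s)) in *.
    apply Rle_trans with (1 := H). unfold c1. apply Rmult_le_compat_l; lra. }
  pose proof (Rabs_le_between _ _ (Hend u1 a ltac:(lra) Ha)).
  pose proof (Rabs_le_between _ _ (Hend u2 b ltac:(lra) Hb)).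
  pose proof (Rmax_l u1 u2). pose proof (Rmax_r u1 u2).
  set (m := Rmax (sg a) (sg b)).
  assert (Hm : m <= Rmax u1 u2 + c1).
  { unfold m. apply Rmax_lub; lra. }
  destruct (Rle_dec (sg t) m) as [Hw|Hw]. lra.
  pose proof (Rmax_l (sg a) (sg b)). pose proof (Rmax_r (sg a) (sg b)). fold m in H3, H4.
  destruct (civt sg a t J ltac:(lra) ltac:(intros; apply Hcc; lra) m ltac:(lra)) as [t1 [Ht1 Ht1']].
  destruct (civt sg t b J ltac:(lra) ltac:(intros; apply Hcc; lra) m ltac:(lra)) as [t2 [Ht2 Ht2']].
  apply Rabs_le_between in Ht1'. apply Rabs_le_between in Ht2'.
  assert (H12 : t2 - t1 <= T0).
  { assert (Hs : a <= t1 <= b) by lra. assert (Hs' : a <= t2 <= b) by lra.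
    pose proof (qg_lo X _ _ _ _ _ _ Hq Hl Hs Hs').
    pose proof (qg_up X _ _ _ _ _ _ HG (GI (sg t1)) (GI (sg t2))).
    pose proof (Hp t1 Hs). pose proof (Hp t2 Hs').
    pose proof (d_tri X (q t1) (G (sg t1)) (q t2)). pose proof (d_tri X (G (sg t1)) (G (sg t2)) (q t2)).
    rewrite (d_sym X (G (sg t2)) (q t2)) in *.
    rewrite Rabs_minus_sym, Rabs_right in H5 by lra.
    assert (Rabs (sg t1 - sg t2) <= 2 * J) by (apply Rabs_le; lra).
    assert (Lm * Rabs (sg t1 - sg t2) <= Lm * (2 * J)) by (apply Rmult_le_compat_l; lra).
    apply Rle_trans with (1 := H5). unfold T0. apply Rmult_le_compat_l; lra. }
  assert (Hw1 : Rabs (sg t - sg t1) <= W).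
  { assert (Hs : a <= t1 <= b) by lra.
    pose proof (qg_lo X _ _ _ _ _ _ HG HL (GI (sg t)) (GI (sg t1))).
    pose proof (qg_up X _ _ _ _ _ _ Hq Ht Hs).
    pose proof (Hp t1 Hs). pose proof (Hp t Ht).
    pose proof (d_tri X (G (sg t)) (q t) (G (sg t1))). pose proof (d_tri X (q t) (q t1) (G (sg t1))).
    rewrite (d_sym X (G (sg t)) (q t)) in *.
    rewrite Rabs_right in H6 by lra.
    assert (lam * (t - t1) <= lam * T0) by (apply Rmult_le_compat_l; lra).
    apply Rle_trans with (1 := H5). unfold W. apply Rmult_le_compat_l; lra. }
  apply Rabs_le_between in Hw1. lra.
Qed.

Lemma loc (Lm E lam eps R0 : R) : 1 <= Lm -> 0 <= E -> 1 <= lam -> 0 <= eps -> 0 <= R0 ->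
  exists C, 0 <= C /\ forall (G : R -> X) q a b (sg : R -> R) u1 u2,
    quasi_geodesic_on X Lm E whole_line G ->
    quasi_geodesic_on X lam eps (fun t => a <= t <= b) q -> a <= b ->
    (forall t, a <= t <= b -> dist (q t) (G (sg t)) <= R0) ->
    dist (q a) (G u1) <= R0 -> dist (q b) (G u2) <= R0 ->
    forall t, a <= t <= b -> Rmin u1 u2 - C <= sg t <= Rmax u1 u2 + C.
Proof.
  intros HL HE Hl He HR.
  destruct (loc_upper Lm E lam eps R0 HL HE Hl He HR) as [C [HC H]].
  exists C. split; auto. intros G q a b sg u1 u2 HG Hq Hab Hp Ha Hb t Ht. split.
  - assert (H' := H (fun s => G (- s)) q a b (fun s => - sg s) (- u1) (- u2) (qg_neg X _ _ _ HG) Hq Hab).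
    simpl in H'. rewrite !Ropp_involutive in H'.
    specialize (H' ltac:(intros s Hs; rewrite Ropp_involutive; apply Hp; exact Hs) Ha Hb t Ht).
    assert (Rmax (- u1) (- u2) = - Rmin u1 u2).
    { unfold Rmax, Rmin. destruct (Rle_dec (-u1) (-u2)), (Rle_dec u1 u2); lra. }
    lra.
  - apply (H G q a b sg u1 u2 HG Hq Hab Hp Ha Hb t Ht).
Qed.

End Loc.


Lemma strict_incr_ge (tau : nat -> nat) : strict_incr tau -> forall k, (k <= tau k)%nat.
Proof.
  intros H k. induction k. lia. specialize (H k (S k) ltac:(lia)). lia.
Qed.

Lemma strict_of_succ (u : nat -> nat) : (forall k, (u k < u (S k))%nat) -> strict_incr u.
Proof.
  intros H m n Hmn. induction Hmn. apply H. specialize (H m0). lia.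
Qed.

Lemma nat_floor (x : R) : 0 <= x -> exists i : nat, INR i <= x < INR i + 1.
Proof.
  intros Hx. destruct (archimed x) as [H1 H2].
  assert (Hz : (0 < up x)%Z) by (apply lt_0_IZR; lra).
  exists (Z.to_nat (up x - 1)). rewrite INR_IZR_INZ, Z2Nat.id by lia.
  rewrite minus_IZR. simpl. lra.
Qed.

Definition dpt (j : nat) : R := INR (fst (Cantor.of_nat j)) / INR (S (snd (Cantor.of_nat j))).

Lemma dpt_dense t e : 0 <= t -> 0 < e -> exists j, Rabs (dpt j - t) <= e.
Proof.
  intros Ht He. destruct (INR_unbounded (/ e)) as [m Hm].
  set (k := INR (S m)). assert (Hk : 0 < k) by (unfold k; apply lt_0_INR; lia).
  assert (Hk2 : / e < k) by (unfold k; rewrite S_INR; lra).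
  destruct (nat_floor (t * k)) as [i Hi]. apply Rmult_le_pos; lra.
  exists (Cantor.to_nat (i, m)). unfold dpt. rewrite cancel_of_to. cbn [fst snd]. fold k.
  assert (Hik : INR i / k = t - (t * k - INR i) / k) by (field; lra).
  rewrite Hik.
  assert (0 <= (t * k - INR i) / k) by (apply Rmult_le_pos; [lra| left; apply Rinv_0_lt_compat; lra]).
  assert ((t * k - INR i) / k <= e).
  { apply Rmult_le_reg_r with k; auto. unfold Rdiv. rewrite Rmult_assoc, Rinv_l by lra.
    assert (1 <= e * k).
    { apply Rmult_lt_compat_l with (r := e) in Hk2; auto. rewrite Rinv_r in Hk2; lra. }
    lra. }
  rewrite Rabs_left1 by lra. lra.
Qed.

Fixpoint rho_of (ext : (nat -> nat) * R -> nat -> nat) (p : nat -> R) (j : nat) : nat -> nat :=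
  match j with
  | O => fun k => k
  | S j' => fun k => rho_of ext p j' (ext (rho_of ext p j', p j') k)
  end.

Section AA.
Variable X : MetricSpace.

Lemma conv_cauchy (z : nat -> X) l : seq_converges X z l ->
  forall e, 0 < e -> exists K, forall a b, (K <= a)%nat -> (K <= b)%nat -> dist (z a) (z b) <= e.
Proof.
  intros H e He. destruct (H (e/2) ltac:(lra)) as [K HK]. exists K. intros a b Ha Hb.
  pose proof (HK a Ha). pose proof (HK b Hb). pose proof (d_tri X (z a) l (z b)).
  rewrite (d_sym X l (z b)) in *. lra.
Qed.

Lemma cauchy_conv (Hp : proper_space X) (z : nat -> X) x r :
  (forall k, dist x (z k) <= r) ->
  (forall e, 0 < e -> exists K, forall a b, (K <= a)%nat -> (K <= b)%nat -> dist (z a) (z b) <= e) ->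
  exists l, seq_converges X z l.
Proof.
  intros Hb Hc. destruct (Hp x r z Hb) as [phi [l [Hphi [_ Hl]]]]. exists l.
  intros e He. destruct (Hc (e/2) ltac:(lra)) as [K HK]. destruct (Hl (e/2) ltac:(lra)) as [K' HK'].
  exists (max K K'). intros k Hk.
  pose proof (strict_incr_ge _ Hphi (max K K')).
  pose proof (HK k (phi (max K K')) ltac:(lia) ltac:(lia)).
  pose proof (HK' (max K K') ltac:(lia)).
  pose proof (d_tri X (z k) (z (phi (max K K'))) l). lra.
Qed.

Lemma AA (Hp : proper_space X) (f : nat -> R -> X) (x0 : X) :
  (forall k s t, dist (f k s) (f k t) <= Rabs (s - t)) -> (forall k, f k 0 = x0) ->
  exists psi gam, strict_incr psi /\ forall t, 0 <= t -> seq_converges X (fun k => f (psi k) t) (gam t).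
Proof.
  intros Hlip H0.
  assert (Hbd : forall k t, dist x0 (f k t) <= Rabs t).
  { intros k t. rewrite <- (H0 k). replace (Rabs t) with (Rabs (0 - t)). apply Hlip.
    rewrite Rminus_0_l, Rabs_Ropp. auto. }
  assert (Hext : forall rt : (nat -> nat) * R, exists tau, strict_incr tau /\
            exists l, seq_converges X (fun k => f (fst rt (tau k)) (snd rt)) l).
  { intros [rh t]. simpl. destruct (Hp x0 (Rabs t) (fun k => f (rh k) t) (fun k => Hbd _ _))
      as [phi [l [H1 [_ H2]]]]. exists phi. split; auto. exists l; auto. }
  destruct (choice _ Hext) as [ext Hext'].
  set (rho := rho_of ext dpt).
  assert (Hrho : forall j, strict_incr (rho j)).
  { induction j; simpl. intros m n H; auto.
    intros m n H. apply IHj. apply (proj1 (Hext' (rho j, dpt j))). auto. }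
  assert (Hsub : forall j dd m, exists m', (m <= m')%nat /\ rho (S j + dd)%nat m = rho (S j) m').
  { intros j dd. induction dd; intros m.
    - exists m. rewrite Nat.add_0_r. split; auto.
    - replace (S j + S dd)%nat with (S (S j + dd)) by lia.
      simpl. fold rho.
      destruct (IHdd (ext (rho (S j + dd)%nat, dpt (S j + dd)) m)) as [m' [Hm1 Hm2]].
      exists m'. split.
      + pose proof (strict_incr_ge _ (proj1 (Hext' (rho (S j + dd)%nat, dpt (S j + dd)))) m). lia.
      + rewrite <- Hm2; try reflexivity. }
  set (diag := fun k => rho (S k) k).
  assert (Hdiag : strict_incr diag).
  { apply strict_of_succ. intros k. unfold diag.
    change (rho (S (S k)) (S k)) with (rho (S k) (ext (rho (S k), dpt (S k)) (S k))).
    apply (Hrho (S k)). pose proof (strict_incr_ge _ (proj1 (Hext' (rho (S k), dpt (S k)))) (S k)). lia. }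
  assert (Hpt : forall j, exists l, seq_converges X (fun k => f (diag k) (dpt j)) l).
  { intros j. destruct (proj2 (Hext' (rho j, dpt j))) as [l Hl]. exists l.
    intros e He. destruct (Hl e He) as [K HK]. exists (max K j). intros k Hk.
    destruct (Hsub j (k - j)%nat k) as [m' [Hm1 Hm2]].
    unfold diag. replace (S k) with (S j + (k - j))%nat by lia. rewrite Hm2.
    apply (HK m'). lia. }
  assert (Hcv : forall t, exists l, 0 <= t -> seq_converges X (fun k => f (diag k) t) l).
  { intros t. destruct (Rle_dec 0 t) as [Ht|Ht]; [|exists x0; lra].
    destruct (cauchy_conv Hp (fun k => f (diag k) t) x0 (Rabs t) (fun k => Hbd _ _)) as [l Hl].
    - intros e He. destruct (dpt_dense t (e/3) Ht ltac:(lra)) as [j Hj].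
      destruct (Hpt j) as [l Hl]. destruct (conv_cauchy _ _ Hl (e/3) ltac:(lra)) as [K HK].
      exists K. intros a b Ha Hb. pose proof (HK a b Ha Hb).
      pose proof (Hlip (diag a) t (dpt j)). pose proof (Hlip (diag b) (dpt j) t).
      rewrite Rabs_minus_sym in Hj.
      pose proof (d_tri X (f (diag a) t) (f (diag a) (dpt j)) (f (diag b) t)).
      pose proof (d_tri X (f (diag a) (dpt j)) (f (diag b) (dpt j)) (f (diag b) t)).
      rewrite (Rabs_minus_sym (dpt j) t) in H2. lra.
    - exists l. intros _. exact Hl. }
  destruct (choice _ Hcv) as [gam Hgam].
  exists diag, gam. split; auto.
Qed.
End AA.


Section Unif.
Variable X : MetricSpace.

Lemma lim_lip (f : nat -> R -> X) (gam : R -> X) :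
  (forall k s t, dist (f k s) (f k t) <= Rabs (s - t)) ->
  (forall t, 0 <= t -> seq_converges X (fun k => f k t) (gam t)) ->
  forall s t, 0 <= s -> 0 <= t -> dist (gam s) (gam t) <= Rabs (s - t).
Proof.
  intros Hl Hc s t Hs Ht. apply small_le. intros e He.
  destruct (Hc s Hs (e/2) ltac:(lra)) as [K1 H1]. destruct (Hc t Ht (e/2) ltac:(lra)) as [K2 H2].
  specialize (H1 (max K1 K2) ltac:(lia)). specialize (H2 (max K1 K2) ltac:(lia)).
  pose proof (Hl (max K1 K2) s t).
  pose proof (d_tri X (gam s) (f (max K1 K2) s) (gam t)).
  pose proof (d_tri X (f (max K1 K2) s) (f (max K1 K2) t) (gam t)).
  rewrite (d_sym X (gam s) (f (max K1 K2) s)) in *. lra.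
Qed.

Lemma unif (f : nat -> R -> X) (gam : R -> X) :
  (forall k s t, dist (f k s) (f k t) <= Rabs (s - t)) ->
  (forall t, 0 <= t -> seq_converges X (fun k => f k t) (gam t)) ->
  forall T e, 0 < e -> exists K, forall k, (K <= k)%nat -> forall t, 0 <= t <= T -> dist (f k t) (gam t) <= e.
Proof.
  intros Hl Hc T e He. set (dl := e / 3).
  assert (Hdl : 0 < dl) by (unfold dl; lra).
  assert (Hgr : forall m, exists K, forall i, (i <= m)%nat -> forall k, (K <= k)%nat ->
             dist (f k (INR i * dl)) (gam (INR i * dl)) <= dl).
  { induction m.
    - destruct (Hc (INR 0 * dl) ltac:(simpl; lra) dl Hdl) as [K HK]. exists K. intros i Hi k Hk.
      replace i with 0%nat by lia. apply HK; auto.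
    - destruct IHm as [K HK].
      destruct (Hc (INR (S m) * dl) ltac:(apply Rmult_le_pos; [apply pos_INR|lra]) dl Hdl) as [K' HK'].
      exists (max K K'). intros i Hi k Hk. destruct (Nat.eq_dec i (S m)).
      + subst. apply HK'. lia.
      + apply HK. lia. lia. }
  destruct (INR_unbounded (T / dl)) as [m Hm].
  destruct (Hgr m) as [K HK]. exists K. intros k Hk t Ht.
  destruct (nat_floor (t / dl)) as [i Hi]. apply Rmult_le_pos; [lra| left; apply Rinv_0_lt_compat; lra].
  assert (Htd : t / dl <= T / dl) by (apply Rmult_le_compat_r; [left; apply Rinv_0_lt_compat|]; lra).
  assert (Him : (i < m)%nat) by (apply INR_lt; lra).
  assert (Hti : INR i * dl <= t < INR i * dl + dl).
  { assert (t = t / dl * dl) by (field; lra).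
    split.
    - rewrite H. apply Rmult_le_compat_r; lra.
    - rewrite H at 1. replace (INR i * dl + dl) with ((INR i + 1) * dl) by ring.
      apply Rmult_lt_compat_r; lra. }
  assert (H0i : 0 <= INR i * dl) by (apply Rmult_le_pos; [apply pos_INR|lra]).
  pose proof (HK i ltac:(lia) k Hk).
  pose proof (Hl k t (INR i * dl)).
  pose proof (lim_lip f gam Hl Hc (INR i * dl) t H0i ltac:(lra)).
  pose proof (d_tri X (f k t) (f k (INR i * dl)) (gam t)).
  pose proof (d_tri X (f k (INR i * dl)) (gam (INR i * dl)) (gam t)).
  rewrite Rabs_right in H0 by lra. rewrite Rabs_left1 in H1 by lra.
  unfold dl in *. lra.
Qed.

End Unif.


Definition clamp (l t : R) := Rmax 0 (Rmin t l).

Lemma clamp_in l t : 0 <= l -> 0 <= clamp l t <= l.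
Proof. intros. unfold clamp, Rmax, Rmin. destruct (Rle_dec t l), (Rle_dec 0 _); lra. Qed.

Lemma clamp_id l t : 0 <= t <= l -> clamp l t = t.
Proof. intros. unfold clamp, Rmax, Rmin. destruct (Rle_dec t l), (Rle_dec 0 _); lra. Qed.

Lemma Rmin_lip s t l : Rabs (Rmin s l - Rmin t l) <= Rabs (s - t).
Proof. unfold Rmin. destruct (Rle_dec s l), (Rle_dec t l); unfold Rabs; repeat destruct Rcase_abs; lra. Qed.
Lemma Rmax_lip s t : Rabs (Rmax 0 s - Rmax 0 t) <= Rabs (s - t).
Proof. unfold Rmax. destruct (Rle_dec 0 s), (Rle_dec 0 t); unfold Rabs; repeat destruct Rcase_abs; lra. Qed.
Lemma clamp_lip l s t : 0 <= l -> Rabs (clamp l s - clamp l t) <= Rabs (s - t).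
Proof. intros. unfold clamp. eapply Rle_trans. apply Rmax_lip. apply Rmin_lip. Qed.

Section Core.
Variable X : MetricSpace.

Lemma core_part1 (Hgeod : geodesic_space X) (G : R -> X) (Lm E : R) (N : gauge) (L D : R) (y : nat -> X) :
  1 <= Lm -> 0 <= E -> quasi_geodesic_on X Lm E whole_line G -> is_N_Morse X N whole_line G ->
  0 < L -> (forall n, dist (y n) (G (INR n * L)) <= D) ->
  exists beta : nat -> R -> X,
    (forall n, geodesic_on X (fun t => 0 <= t <= dist (G 0) (y n)) (beta n) /\
               beta n 0 = G 0 /\ beta n (dist (G 0) (y n)) = y n) /\
    (forall n s t, dist (beta n s) (beta n t) <= Rabs (s - t)) /\
    exists M CA, 0 <= M /\ 0 <= CA /\ forall n t, 0 <= t <= dist (G 0) (y n) ->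
       exists s, dist (beta n t) (G s) <= M /\ - CA <= s <= INR n * L + CA.
Proof.
  intros HL1 HE HG HN HL HD.
  assert (HD0 : 0 <= D) by (pose proof (HD 0%nat); pose proof (d_nn X (y 0%nat) (G (INR 0 * L))); lra).
  set (x0 := G 0). set (l := fun n => dist x0 (y n)).
  assert (Hl0 : forall n, 0 <= l n) by (intros; apply d_nn).
  destruct (choice (fun n c => geodesic_on X (fun t => 0 <= t <= l n) c /\ c 0 = x0 /\ c (l n) = y n)
              (fun n => Hgeod x0 (y n))) as [b0 Hb0].
  set (beta := fun n t => b0 n (clamp (l n) t)).
  assert (Hgeo : forall n, geodesic_on X (fun t => 0 <= t <= l n) (beta n) /\ beta n 0 = x0 /\ beta n (l n) = y n).
  { intros n. destruct (Hb0 n) as [H1 [H2 H3]]. unfold beta. split; [|split].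
    - intros s t Hs Ht. rewrite !clamp_id by auto. apply H1; auto.
    - rewrite clamp_id by (pose proof (Hl0 n); lra). auto.
    - rewrite clamp_id by (pose proof (Hl0 n); lra). auto. }
  assert (Hlip : forall n s t, dist (beta n s) (beta n t) <= Rabs (s - t)).
  { intros n s t. destruct (Hb0 n) as [H1 _]. unfold beta.
    rewrite H1 by (apply clamp_in; auto). apply clamp_lip; auto. }
  exists beta. split; [exact Hgeo|]. split; [exact Hlip|].
  set (M := Rmax 0 (N 1 (0 + 2 * D)) + D).
  assert (HM : D <= M) by (unfold M; pose proof (Rmax_l 0 (N 1 (0 + 2 * D))); lra).
  assert (Hproj : forall n t, 0 <= t <= l n -> exists s, dist (beta n t) (G s) <= M).
  { intros n t Ht. destruct (Hgeo n) as [Hg [Hg0 Hgl]].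
    assert (Ha : dist (beta n 0) (G 0) <= D) by (rewrite Hg0; unfold x0; rewrite d_refl; auto).
    assert (Hb : dist (beta n (l n)) (G (INR n * L)) <= D) by (rewrite Hgl; auto).
    destruct (morse_perturb X N whole_line G 1 0 0 (l n) (beta n) D 0 (INR n * L) HN
      ltac:(lra) ltac:(lra) HD0 (Hl0 n) (geo_qg X _ _ Hg) I I Ha Hb t Ht) as [s [_ Hs]].
    exists s. exact Hs. }
  destruct (choice (fun (p : nat * R) s => 0 <= snd p <= l (fst p) -> dist (beta (fst p) (snd p)) (G s) <= M))
    as [sg Hsg].
  { intros [n t]. simpl. destruct (Rle_dec 0 t) as [h1|h1]; [destruct (Rle_dec t (l n)) as [h2|h2]|].
    - destruct (Hproj n t ltac:(lra)) as [s Hs]. exists s. auto.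
    - exists 0. lra. - exists 0. lra. }
  assert (HM0 : 0 <= M) by lra.
  destruct (loc X Lm E 1 0 M HL1 HE ltac:(lra) ltac:(lra) HM0) as [CA [HCA Hloc]].
  exists M, CA. split; auto. split; auto. intros n t Ht.
  exists (sg (n, t)). split. apply (Hsg (n, t)). auto.
  destruct (Hgeo n) as [Hg [Hg0 Hgl]].
  assert (HnL : 0 <= INR n * L) by (apply Rmult_le_pos; [apply pos_INR|lra]).
  pose proof (Hloc G (beta n) 0 (l n) (fun t => sg (n, t)) 0 (INR n * L) HG (geo_qg X _ _ Hg) (Hl0 n)
      ltac:(intros u Hu; apply (Hsg (n, u)); auto)
      ltac:(rewrite Hg0; unfold x0; rewrite d_refl; auto)
      ltac:(rewrite Hgl; pose proof (HD n); lra) t Ht) as Hh.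
  simpl in Hh. rewrite Rmin_left in Hh by auto. rewrite Rmax_right in Hh by auto. lra.
Qed.

End Core.


Section Cov.
Variable X : MetricSpace.

Lemma coverage (G : R -> X) (Lm E L D M : R) (y : nat -> X) (beta : nat -> R -> X) :
  1 <= Lm -> 0 <= E -> quasi_geodesic_on X Lm E whole_line G -> 0 < L -> 0 <= D -> 0 <= M ->
  (forall n, dist (y n) (G (INR n * L)) <= D) ->
  (forall n, geodesic_on X (fun t => 0 <= t <= dist (G 0) (y n)) (beta n) /\
               beta n 0 = G 0 /\ beta n (dist (G 0) (y n)) = y n) ->
  (forall n s t, dist (beta n s) (beta n t) <= Rabs (s - t)) ->
  (forall n t, 0 <= t <= dist (G 0) (y n) -> exists s, dist (beta n t) (G s) <= M) ->
  forall K, 0 <= K -> exists B, forall n v, - K <= v <= INR n * L + K ->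
    exists t, 0 <= t <= dist (G 0) (y n) /\ dist (beta n t) (G v) <= B.
Proof.
  intros HL1 HE HG HL HD0 HM0 HD Hgeo Hlip Hproj K HK.
  assert (GI : forall s, whole_line s) by (intros; exact I).
  set (l := fun n => dist (G 0) (y n)).
  assert (Hl0 : forall n, 0 <= l n) by (intros; apply d_nn).
  destruct (choice (fun (p : nat * R) s => 0 <= snd p <= l (fst p) -> dist (beta (fst p) (snd p)) (G s) <= M))
    as [sg Hsg].
  { intros [n t]. simpl. destruct (Rle_dec 0 t) as [h1|h1]; [destruct (Rle_dec t (l n)) as [h2|h2]|].
    - destruct (Hproj n t ltac:(unfold l in *; lra)) as [s Hs]. exists s. auto.
    - exists 0. lra. - exists 0. lra. }
  set (c0 := Lm * (M + D + E)).
  set (J := Lm * (2 * M + 1 + E)).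
  assert (Hc0 : 0 <= c0) by (unfold c0; apply Rmult_le_pos; lra).
  assert (HJ : 0 <= J) by (unfold J; apply Rmult_le_pos; lra).
  exists (Rmax (M + Lm * J + E) (D + Lm * (K + c0) + E)).
  pose proof (Rmax_l (M + Lm * J + E) (D + Lm * (K + c0) + E)).
  pose proof (Rmax_r (M + Lm * J + E) (D + Lm * (K + c0) + E)).
  intros n v Hv.
  destruct (Hgeo n) as [Hg [Hg0 Hgl]]. fold (l n) in Hg, Hgl.
  set (s := fun t => sg (n, t)).
  assert (Hs : forall t, 0 <= t <= l n -> dist (beta n t) (G (s t)) <= M) by (intros t Ht; apply (Hsg (n, t)); auto).
  assert (Hs0 : Rabs (s 0 - 0) <= c0).
  { pose proof (Hs 0 ltac:(pose proof (Hl0 n); lra)). rewrite Hg0 in H1.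
    pose proof (qg_lo X _ _ _ _ _ _ HG HL1 (GI (s 0)) (GI 0)). rewrite d_sym in H1.
    apply Rle_trans with (1 := H2). unfold c0. apply Rmult_le_compat_l; lra. }
  assert (Hsl : Rabs (s (l n) - INR n * L) <= c0).
  { pose proof (Hs (l n) ltac:(pose proof (Hl0 n); lra)). rewrite Hgl in H1.
    pose proof (qg_lo X _ _ _ _ _ _ HG HL1 (GI (s (l n))) (GI (INR n * L))).
    pose proof (HD n). pose proof (d_tri X (G (s (l n))) (y n) (G (INR n * L))).
    rewrite (d_sym X (G (s (l n))) (y n)) in H4.
    apply Rle_trans with (1 := H2). unfold c0. apply Rmult_le_compat_l; lra. }
  apply Rabs_le_between in Hs0. apply Rabs_le_between in Hsl.
  destruct (classic (s 0 <= v <= s (l n) \/ s (l n) <= v <= s 0)) as [Hb|Hb].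
  - destruct (civt s 0 (l n) J (Hl0 n)) with (w := v) as [t [Ht Htv]]; auto.
    + intros t t' Ht Ht' Htt.
      pose proof (qg_lo X _ _ _ _ _ _ HG HL1 (GI (s t)) (GI (s t'))).
      pose proof (Hs t Ht). pose proof (Hs t' Ht'). pose proof (Hlip n t t').
      pose proof (d_tri X (G (s t)) (beta n t) (G (s t'))).
      pose proof (d_tri X (beta n t) (beta n t') (G (s t'))).
      rewrite (d_sym X (G (s t)) (beta n t)) in *.
      apply Rle_trans with (1 := H1). unfold J. apply Rmult_le_compat_l; lra.
    + exists t. split; auto.
      pose proof (Hs t Ht). pose proof (qg_up X _ _ _ _ _ _ HG (GI (s t)) (GI v)).
      pose proof (d_tri X (beta n t) (G (s t)) (G v)).
      assert (Lm * Rabs (s t - v) <= Lm * J) by (apply Rmult_le_compat_l; lra).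
      lra.
  - apply not_or_and in Hb. destruct Hb as [Hb1 Hb2].
    apply not_and_or in Hb1. apply not_and_or in Hb2.
    assert (Hcase : v < s 0 /\ v < s (l n) \/ v > s 0 /\ v > s (l n)) by (destruct Hb1, Hb2; lra).
    destruct Hcase as [Hc|Hc].
    + exists 0. split. pose proof (Hl0 n); unfold l in *; lra. rewrite Hg0.
      pose proof (qg_up X _ _ _ _ _ _ HG (GI 0) (GI v)).
      assert (Rabs (0 - v) <= K + c0) by (apply Rabs_le; lra).
      assert (Lm * Rabs (0 - v) <= Lm * (K + c0)) by (apply Rmult_le_compat_l; lra).
      pose proof (d_nn X (y n) (G (INR n * L))). lra.
    + exists (l n). split. pose proof (Hl0 n); unfold l in *; lra. rewrite Hgl.
      pose proof (qg_up X _ _ _ _ _ _ HG (GI (INR n * L)) (GI v)).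
      assert (Rabs (INR n * L - v) <= K + c0) by (apply Rabs_le; lra).
      assert (Lm * Rabs (INR n * L - v) <= Lm * (K + c0)) by (apply Rmult_le_compat_l; lra).
      pose proof (HD n). pose proof (d_tri X (y n) (G (INR n * L)) (G v)). lra.
Qed.

End Cov.


Section BM.
Variable X : MetricSpace.

Lemma beta_morse (G : R -> X) (Lm E L D M CA : R) (N : gauge) (y : nat -> X) (beta : nat -> R -> X) :
  1 <= Lm -> 0 <= E -> quasi_geodesic_on X Lm E whole_line G -> is_N_Morse X N whole_line G ->
  0 < L -> 0 <= D -> 0 <= M -> 0 <= CA ->
  (forall n, dist (y n) (G (INR n * L)) <= D) ->
  (forall n, geodesic_on X (fun t => 0 <= t <= dist (G 0) (y n)) (beta n) /\
               beta n 0 = G 0 /\ beta n (dist (G 0) (y n)) = y n) ->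
  (forall n s t, dist (beta n s) (beta n t) <= Rabs (s - t)) ->
  (forall n t, 0 <= t <= dist (G 0) (y n) ->
       exists s, dist (beta n t) (G s) <= M /\ - CA <= s <= INR n * L + CA) ->
  exists Nb : gauge, forall n, is_N_Morse X Nb (fun t => 0 <= t <= dist (G 0) (y n)) (beta n).
Proof.
  intros HL1 HE HG HN HL HD0 HM0 HCA HD Hgeo Hlip Hproj.
  assert (Hproj1 : forall n t, 0 <= t <= dist (G 0) (y n) -> exists s, dist (beta n t) (G s) <= M).
  { intros n t Ht. destruct (Hproj n t Ht) as [s [H1 _]]. eauto. }
  assert (HB : forall p : R * R, exists B, 1 <= fst p -> 0 <= snd p ->
     forall n a b q, a <= b -> quasi_geodesic_on X (fst p) (snd p) (fun t => a <= t <= b) q ->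
     (exists s, 0 <= s <= dist (G 0) (y n) /\ q a = beta n s) ->
     (exists s, 0 <= s <= dist (G 0) (y n) /\ q b = beta n s) ->
     forall t, a <= t <= b -> exists s, 0 <= s <= dist (G 0) (y n) /\ dist (q t) (beta n s) <= B).
  { intros [lam eps]. simpl.
    destruct (classic (1 <= lam /\ 0 <= eps)) as [[Hl He]|Hn]; [| exists 0; intros; exfalso; tauto].
    set (R1 := Rmax 0 (N lam (eps + 2 * M)) + M).
    assert (HR1 : M <= R1) by (unfold R1; pose proof (Rmax_l 0 (N lam (eps + 2 * M))); lra).
    destruct (loc X Lm E lam eps R1 HL1 HE Hl He ltac:(lra)) as [C [HC Hloc]].
    destruct (coverage X G Lm E L D M y beta HL1 HE HG HL HD0 HM0 HD Hgeo Hlip Hproj1 (CA + C) ltac:(lra))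
      as [BK HBK].
    exists (R1 + BK). intros _ _ n a b q Hab Hq [s1 [Hs1 Hqa]] [s2 [Hs2 Hqb]] t Ht.
    destruct (Hproj n s1 Hs1) as [u1 [Hu1 Hu1']].
    destruct (Hproj n s2 Hs2) as [u2 [Hu2 Hu2']].
    rewrite <- Hqa in Hu1. rewrite <- Hqb in Hu2.
    assert (Hp : forall t, exists s, a <= t <= b -> dist (q t) (G s) <= R1).
    { intros t'. destruct (Rle_dec a t') as [h1|h1]; [destruct (Rle_dec t' b) as [h2|h2]|];
        [|exists 0; lra|exists 0; lra].
      destruct (morse_perturb X N whole_line G lam eps a b q M u1 u2 HN Hl He HM0 Hab Hq I I Hu1 Hu2 t'
        ltac:(lra)) as [s [_ Hs]]. exists s. intros _. exact Hs. }
    destruct (choice _ Hp) as [sq Hsq].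
    pose proof (Hloc G q a b sq u1 u2 HG Hq Hab (fun t Ht => Hsq t Ht) ltac:(lra) ltac:(lra) t Ht) as Hl'.
    assert (- CA <= Rmin u1 u2) by (apply Rmin_glb; lra).
    assert (Rmax u1 u2 <= INR n * L + CA) by (apply Rmax_lub; lra).
    destruct (HBK n (sq t) ltac:(lra)) as [s [Hs Hsd]].
    exists s. split; auto.
    pose proof (Hsq t Ht). pose proof (d_tri X (q t) (G (sq t)) (beta n s)).
    rewrite (d_sym X (G (sq t)) (beta n s)) in H2. lra. }
  destruct (choice _ HB) as [Bf HBf].
  exists (fun lam eps => Bf (lam, eps)).
  intros n lam eps a b q Hl He Hab Hq Ha Hb t Ht.
  exact (HBf (lam, eps) Hl He n a b q Hab Hq Ha Hb t Ht).
Qed.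

End BM.


Section CoreT.
Variable X : MetricSpace.

Lemma core (Hproper : proper_space X) (Hgeod : geodesic_space X)
  (G : R -> X) (Lm E : R) (N : gauge) (L D : R) (y : nat -> X) :
  1 <= Lm -> 0 <= E -> quasi_geodesic_on X Lm E whole_line G -> is_N_Morse X N whole_line G ->
  0 < L -> (forall n, dist (y n) (G (INR n * L)) <= D) ->
  exists (x : X) (Nb : gauge) (beta : nat -> R -> X),
    (forall n, geodesic_on X (fun t => 0 <= t <= dist x (y n)) (beta n) /\
               beta n 0 = x /\ beta n (dist x (y n)) = y n /\
               is_N_Morse X Nb (fun t => 0 <= t <= dist x (y n)) (beta n)) /\
    forall phi, strict_incr phi ->
      exists psi gam, strict_incr psi /\ geodesic_ray X gam /\ gam 0 = x /\
        finite_hausdorff X nonneg_half gam nonneg_half G /\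
        unif_cvg_compacts X (fun k => beta (phi (psi k)))
                          (fun k => dist x (y (phi (psi k)))) gam.
Proof.
  intros HL1 HE HG HN HL HD.
  assert (GI : forall s, whole_line s) by (intros; exact I).
  assert (HD0 : 0 <= D) by (pose proof (HD 0%nat); pose proof (d_nn X (y 0%nat) (G (INR 0 * L))); lra).
  destruct (core_part1 X Hgeod G Lm E N L D y HL1 HE HG HN HL HD) as
    [beta [Hgeo [Hlip [M [CA [HM0 [HCA Hproj]]]]]]].
  destruct (beta_morse X G Lm E L D M CA N y beta HL1 HE HG HN HL HD0 HM0 HCA HD Hgeo Hlip Hproj) as [Nb HNb].
  assert (Hproj1 : forall n t, 0 <= t <= dist (G 0) (y n) -> exists s, dist (beta n t) (G s) <= M).
  { intros n t Ht. destruct (Hproj n t Ht) as [s [H1 _]]. eauto. }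
  exists (G 0), Nb, beta. split.
  { intros n. destruct (Hgeo n) as [H1 [H2 H3]]. auto. }
  intros phi Hphi.
  destruct (AA X Hproper (fun k => beta (phi k)) (G 0) (fun k => Hlip (phi k)) (fun k => proj1 (proj2 (Hgeo (phi k)))))
    as [psi [gam [Hpsi Hcv]]].
  set (f := fun k => beta (phi (psi k))).
  assert (Hflip : forall k s t, dist (f k s) (f k t) <= Rabs (s - t)) by (intros; apply Hlip).
  assert (Hfcv : forall t, 0 <= t -> seq_converges X (fun k => f k t) (gam t)) by exact Hcv.
  assert (Hidx : forall k, (k <= phi (psi k))%nat).
  { intros k. pose proof (strict_incr_ge _ Hpsi k). pose proof (strict_incr_ge _ Hphi (psi k)). lia. }
  assert (Hlen : forall T, exists K, forall n, (K <= n)%nat -> T <= dist (G 0) (y n)).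
  { intros T. destruct (INR_unbounded (Lm * (Rabs T + E + D) / L)) as [K HK]. exists K. intros n Hn.
    assert (HKL : Lm * (Rabs T + E + D) <= INR n * L).
    { apply le_INR in Hn.
      assert (Lm * (Rabs T + E + D) / L * L <= INR n * L) by (apply Rmult_le_compat_r; lra).
      unfold Rdiv in H. rewrite Rmult_assoc, Rinv_l in H by lra. lra. }
    pose proof (qg_lo X _ _ _ _ _ _ HG HL1 (GI 0) (GI (INR n * L))).
    rewrite Rminus_0_l, Rabs_Ropp, Rabs_right in H by (apply Rle_ge, Rmult_le_pos; [apply pos_INR|lra]).
    assert (Rabs T + E + D <= dist (G 0) (G (INR n * L)) + E).
    { apply Rmult_le_reg_l with Lm. lra. lra. }
    pose proof (HD n). pose proof (d_tri X (G 0) (y n) (G (INR n * L))).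
    pose proof (Rle_abs T). lra. }
  exists psi, gam. split; [exact Hpsi|].
  assert (Hg0 : gam 0 = G 0).
  { apply d_eq. apply Rle_antisym; [|apply d_nn]. apply small_le. intros e He.
    destruct (Hfcv 0 ltac:(lra) e He) as [K HK]. specialize (HK K (le_n K)).
    unfold f in HK. rewrite (proj1 (proj2 (Hgeo _))) in HK. rewrite d_sym. lra. }
  split; [|split; [exact Hg0|split]].
  -
    intros s t Hs Ht. unfold nonneg_half in Hs, Ht. apply Rle_antisym.
    + apply (lim_lip X f gam Hflip Hfcv s t Hs Ht).
    + apply small_le. intros e He.
      destruct (Hfcv s Hs (e/2) ltac:(lra)) as [K1 H1]. destruct (Hfcv t Ht (e/2) ltac:(lra)) as [K2 H2].
      destruct (Hlen (Rmax s t)) as [K3 H3].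
      set (k := max K1 (max K2 K3)).
      specialize (H1 k ltac:(unfold k; lia)). specialize (H2 k ltac:(unfold k; lia)).
      specialize (H3 (phi (psi k)) ltac:(pose proof (Hidx k); unfold k in *; lia)).
      pose proof (Rmax_l s t). pose proof (Rmax_r s t).
      destruct (Hgeo (phi (psi k))) as [Hg _].
      assert (Hd : dist (f k s) (f k t) = Rabs (s - t)) by (apply Hg; lra).
      pose proof (d_tri X (f k s) (gam s) (f k t)). pose proof (d_tri X (gam s) (gam t) (f k t)).
      rewrite (d_sym X (gam t) (f k t)) in H5. lra.
  -
    destruct (coverage X G Lm E L D M y beta HL1 HE HG HL HD0 HM0 HD Hgeo Hlip Hproj1 0 ltac:(lra)) as [BK HBK].
    exists (Rmax (1 + M + Lm * CA + E) (BK + 1)).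
    pose proof (Rmax_l (1 + M + Lm * CA + E) (BK + 1)). pose proof (Rmax_r (1 + M + Lm * CA + E) (BK + 1)).
    split.
    + intros t Ht. unfold nonneg_half in Ht.
      destruct (Hfcv t Ht 1 ltac:(lra)) as [K1 H1]. destruct (Hlen t) as [K2 H2].
      set (k := max K1 K2).
      specialize (H1 k ltac:(unfold k; lia)).
      specialize (H2 (phi (psi k)) ltac:(pose proof (Hidx k); unfold k in *; lia)).
      destruct (Hproj (phi (psi k)) t ltac:(lra)) as [s0 [Hs0 Hs0']].
      fold (f k) in Hs0.
      pose proof (d_tri X (gam t) (f k t) (G s0)). rewrite (d_sym X (gam t) (f k t)) in H3.
      destruct (Rle_dec 0 s0) as [Hp|Hp].
      * exists s0. split. exact Hp. assert (0 <= Lm * CA) by (apply Rmult_le_pos; lra). lra.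
      * exists 0. split. unfold nonneg_half; lra.
        pose proof (qg_up X _ _ _ _ _ _ HG (GI s0) (GI 0)).
        rewrite Rminus_0_r, Rabs_left in H4 by lra.
        assert (Lm * - s0 <= Lm * CA) by (apply Rmult_le_compat_l; lra).
        pose proof (d_tri X (gam t) (G s0) (G 0)). lra.
    + intros s Hs. unfold nonneg_half in Hs.
      set (T := Lm * s + E + BK).
      destruct (unif X f gam Hflip Hfcv T 1 ltac:(lra)) as [K1 H1].
      destruct (INR_unbounded (s / L)) as [K2 HK2].
      set (k := max K1 K2). set (n := phi (psi k)).
      assert (Hn : s <= INR n * L).
      { assert (HK2n : INR K2 <= INR n) by (apply le_INR; pose proof (Hidx k); unfold n, k in *; lia).
        assert (s / L * L <= INR n * L) by (apply Rmult_le_compat_r; lra).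
        unfold Rdiv in H2. rewrite Rmult_assoc, Rinv_l in H2 by lra. lra. }
      destruct (HBK n s ltac:(lra)) as [t [Ht Htd]].
      assert (HtT : t <= T).
      { destruct (Hgeo n) as [Hg [Hb0 _]].
        assert (Hd : dist (beta n 0) (beta n t) = Rabs (0 - t)) by (apply Hg; lra).
        rewrite Hb0, Rminus_0_l, Rabs_Ropp, Rabs_right in Hd by lra.
        pose proof (qg_up X _ _ _ _ _ _ HG (GI 0) (GI s)).
        rewrite Rminus_0_l, Rabs_Ropp, Rabs_right in H2 by lra.
        pose proof (d_tri X (G 0) (G s) (beta n t)). rewrite (d_sym X (G s)) in H3.
        unfold T. lra. }
      exists t. split. unfold nonneg_half; lra.
      specialize (H1 k ltac:(unfold k; lia) t ltac:(lra)).
      pose proof (d_tri X (gam t) (f k t) (G s)). rewrite (d_sym X (gam t) (f k t)) in H2.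
      unfold f in H1, H2. fold n in H1, H2. lra.
  -
    intros T e He.
    destruct (unif X f gam Hflip Hfcv T e He) as [K1 H1]. destruct (Hlen T) as [K2 H2].
    exists (max K1 K2). intros k Hk. split.
    + apply H2. pose proof (Hidx k). lia.
    + intros t Ht. apply (H1 k ltac:(lia) t Ht).
Qed.

End CoreT.


Section Fin.
Variable X : MetricSpace.

Lemma neg_half (gam Gam : R -> X) Lm E :
  1 <= Lm -> 0 <= E -> quasi_geodesic_on X Lm E whole_line Gam -> geodesic_on X whole_line gam ->
  finite_hausdorff X whole_line gam whole_line Gam ->
  finite_hausdorff X nonneg_half gam nonneg_half Gam ->
  finite_hausdorff X nonneg_half (fun t => gam (- t)) nonneg_half (fun t => Gam (- t)).
Proof.
  intros HL1 HE HG Hg [C1 [Hw1 Hw2]] [C2 [Hp1 Hp2]].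
  assert (GI : forall s, whole_line s) by (intros; exact I).
  assert (HC1 : 0 <= C1) by (destruct (Hw1 0 I) as [t [_ Ht]]; pose proof (d_nn X (gam 0) (Gam t)); lra).
  assert (HC2 : 0 <= C2) by (destruct (Hp1 0 ltac:(unfold nonneg_half; lra)) as [t [_ Ht]];
                             pose proof (d_nn X (gam 0) (Gam t)); lra).
  set (d0 := dist (gam 0) (Gam 0)).
  assert (Hd0 : 0 <= d0) by apply d_nn.
  set (C := d0 + C1 + C2 + Lm * (Lm * (C1 + C2 + E)) + E).
  assert (HLL : 0 <= Lm * (Lm * (C1 + C2 + E))) by (apply Rmult_le_pos; [lra|apply Rmult_le_pos; lra]).
  exists C. split.
  - intros t Ht. unfold nonneg_half in Ht.
    destruct (Hw1 (- t) I) as [s0 [_ Hs0]].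
    destruct (Rle_dec s0 0) as [h|h].
    + exists (- s0). split. unfold nonneg_half; lra. rewrite Ropp_involutive. unfold C; lra.
    + destruct (Hp2 s0 ltac:(unfold nonneg_half; lra)) as [u [Hu Hud]]. unfold nonneg_half in Hu.
      assert (Hgg : dist (gam (- t)) (gam u) = Rabs (- t - u)) by (apply Hg; exact I).
      rewrite Rabs_left1 in Hgg by lra.
      pose proof (d_tri X (gam (- t)) (Gam s0) (gam u)). rewrite (d_sym X (Gam s0) (gam u)) in H.
      exists 0. split. unfold nonneg_half; lra. rewrite Ropp_0.
      assert (Hg0 : dist (gam (- t)) (gam 0) = Rabs (- t - 0)) by (apply Hg; exact I).
      rewrite Rabs_left1 in Hg0 by lra.
      pose proof (d_tri X (gam (- t)) (gam 0) (Gam 0)). unfold C, d0 in *. lra.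
  - intros s Hs. unfold nonneg_half in Hs.
    destruct (Hw2 (- s) I) as [u [_ Hu]].
    destruct (Rle_dec u 0) as [h|h].
    + exists (- u). split. unfold nonneg_half; lra. rewrite Ropp_involutive. unfold C; lra.
    + destruct (Hp1 u ltac:(unfold nonneg_half; lra)) as [s' [Hs' Hs'd]]. unfold nonneg_half in Hs'.
      pose proof (d_tri X (Gam (- s)) (gam u) (Gam s')). rewrite (d_sym X (Gam (- s)) (gam u)) in H.
      pose proof (qg_lo X _ _ _ _ _ _ HG HL1 (GI (- s)) (GI s')).
      rewrite Rabs_left1 in H0 by lra.
      assert (Hsb : s <= Lm * (C1 + C2 + E)).
      { apply Rle_trans with (1 := Rle_trans _ _ _ (ltac:(lra) : s <= - (- s - s')) H0).
        apply Rmult_le_compat_l; lra. }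
      exists 0. split. unfold nonneg_half; lra. rewrite Ropp_0.
      pose proof (qg_up X _ _ _ _ _ _ HG (GI 0) (GI (- s))).
      rewrite Rminus_0_l, Ropp_involutive, Rabs_right in H1 by lra.
      assert (Lm * s <= Lm * (Lm * (C1 + C2 + E))) by (apply Rmult_le_compat_l; lra).
      pose proof (d_tri X (gam 0) (Gam 0) (Gam (- s))). unfold C, d0 in *. lra.
Qed.

Lemma iter_iso (g : X -> X) : isometry X g -> forall n a b, dist (Nat.iter n g a) (Nat.iter n g b) = dist a b.
Proof. intros Hi n. induction n; intros a b; simpl; auto. rewrite Hi. auto. Qed.

Lemma zpow_pos (g ginv : X -> X) n x : zpow X g ginv (Z.of_nat n) x = Nat.iter n g x.
Proof. destruct n. reflexivity. simpl. rewrite SuccNat2Pos.id_succ. reflexivity. Qed.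

Lemma zpow_neg (g ginv : X -> X) n x : zpow X g ginv (- Z.of_nat n) x = Nat.iter n ginv x.
Proof. destruct n. reflexivity. simpl. rewrite SuccNat2Pos.id_succ. reflexivity. Qed.

End Fin.

Theorem proposition6p12 (X : MetricSpace)
  (Hproper : proper_space X) (Hgeod : geodesic_space X)
  (g ginv : X -> X) (Hiso : isometry X g)
  (Hinv1 : forall x, ginv (g x) = x) (Hinv2 : forall x, g (ginv x) = x)
  (HMorse : Morse_isometry X g ginv)
  (gp gm : R -> X) (Hpoles : poles X g ginv gp gm) :
  forall x : X,
    converges_to_boundary X (fun n => Nat.iter n g x) gp /\
    converges_to_boundary X (fun n => Nat.iter n ginv x) gm.
Proof.
  intros x.
  destruct Hpoles as [x0 [N [c [Gam [gam [Hconc [Hgam [_ [Hfw [Hfp [_ [Hgp [_ Hgm]]]]]]]]]]]]].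
  destruct Hconc as [HL [Hc [HGc [[Lm [E [HL1 [HE HG]]]] HN]]]].
  set (L := dist x0 (g x0)) in *.
  assert (HGi : forall i, Gam (IZR i * L) = zpow X g ginv i x0).
  { intros i. rewrite <- (Rplus_0_r (IZR i * L)). rewrite HGc by lra. apply (Hc i). }
  assert (Hiso' : isometry X ginv).
  { intros a b. rewrite <- (Hiso (ginv a) (ginv b)), !Hinv2. reflexivity. }
  split.
  - destruct (core X Hproper Hgeod Gam Lm E N L (dist x x0) (fun n => Nat.iter n g x) HL1 HE HG HN HL)
      as [xb [Nb [beta [H1 H2]]]].
    { intros n. rewrite INR_IZR_INZ, HGi, zpow_pos, iter_iso by auto. lra. }
    exists xb, Nb, beta. split; auto.
    intros phi Hphi. destruct (H2 phi Hphi) as [psi [gam' [Hpsi [Hray [Hg0 [Hfh Hu]]]]]].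
    exists psi, gam'. repeat split; auto.
    unfold same_boundary_point.
    eapply fh_trans. exact Hfh. eapply fh_trans. apply fh_sym. exact Hfp. apply fh_sym. exact Hgp.
  - destruct (core X Hproper Hgeod (fun t => Gam (- t)) Lm E N L (dist x x0) (fun n => Nat.iter n ginv x)
      HL1 HE (qg_neg X _ _ _ HG) (morse_neg X _ _ HN) HL)
      as [xb [Nb [beta [H1 H2]]]].
    { intros n. cbv beta. rewrite Ropp_mult_distr_l, INR_IZR_INZ, <- opp_IZR, HGi, zpow_neg, iter_iso by auto. lra. }
    exists xb, Nb, beta. split; auto.
    intros phi Hphi. destruct (H2 phi Hphi) as [psi [gam' [Hpsi [Hray [Hg0 [Hfh Hu]]]]]].
    exists psi, gam'. repeat split; auto.
    unfold same_boundary_point.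
    eapply fh_trans. exact Hfh. eapply fh_trans. apply fh_sym.
    apply (neg_half X gam Gam Lm E HL1 HE HG Hgam Hfw Hfp).
    apply fh_sym. exact Hgm.
Qed.
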